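(* Let $r\ge4$ be an even integer and let $M$ be the binary matroid represented over $\mathrm{GF}(2)$ by the matrix $[I_r\;\;J_r-I_r]$, where $I_r$ is the $r\times r$ identity matrix and $J_r$ the $r\times r$ all-ones matrix. Then $M$ is not elementarily $(r,3)$-weakly base orderable.
   Context: An ordered pair $(B_1,B_2)$ of bases of a matroid has the elementary $k$-exchange property if there exist $k$-element subsets $X\subseteq B_1\setminus B_2$, $Y\subseteq B_2\setminus B_1$ and a bijection $\varphi\colon X\to Y$ such that $(B_1\setminus Z)\cup\varphi(Z)$ is a basis for every $Z\subseteq X$. A matroid is elementarily $(\alpha,k)$-weakly base orderable if every ordered pair $(B_1,B_2)$ of bases with $|B_1\setminus B_2|\ge\alpha$ has the elementary $k$-exchange property. *)

(* Defs.v *)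
From HB Require Import structures.
From mathcomp Require Import all_boot all_order all_algebra.
Set Implicit Arguments. Unset Strict Implicit. Unset Printing Implicit Defensive.
Import GRing.Theory.
Local Open Scope ring_scope.

(* Column matroid of a matrix A over a field F: the ground set is the set of
   column indices 'I_n; a set X of columns is independent iff the columns
   indexed by X are linearly independent, i.e. the span of those columns
   (the column space of A with the other columns zeroed out) has dimension #|X|. *)
Definition col_restrict (F : fieldType) m n (A : 'M[F]_(m, n)) (X : {set 'I_n})
  : 'M[F]_(m, n) := \matrix_(i, j) (if j \in X then A i j else 0).

Definition mx_indep (F : fieldType) m n (A : 'M[F]_(m, n)) (X : {set 'I_n}) : bool :=
  \rank (col_restrict A X) == #|X|.

Definition mx_basis (F : fieldType) m n (A : 'M[F]_(m, n)) (B : {set 'I_n}) : bool :=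
  mx_indep A B && [forall X : {set 'I_n}, (B \proper X) ==> ~~ mx_indep A X].

Definition elem_k_exchange (E : finType) (is_basis : {set E} -> bool)
  (k : nat) (B1 B2 : {set E}) : Prop :=
  exists (X Y : {set E}) (phi : E -> E),
    [/\ X \subset B1 :\: B2, Y \subset B2 :\: B1, #|X| = k & #|Y| = k] /\
    [/\ {in X &, injective phi}, phi @: X = Y &
        forall Z : {set E}, Z \subset X -> is_basis ((B1 :\: Z) :|: phi @: Z)].

Definition elem_wbo (E : finType) (is_basis : {set E} -> bool) (alpha k : nat) : Prop :=
  forall B1 B2 : {set E}, is_basis B1 -> is_basis B2 ->
    (alpha <= #|B1 :\: B2|)%N -> elem_k_exchange is_basis k B1 B2.

Definition MJ (r : nat) : 'M['F_2]_(r, r + r) :=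
  row_mx (1%:M) (const_mx 1 - 1%:M).

(* Main.v *)
Require Import Defs.
From mathcomp Require Import all_boot all_order all_algebra.
From mathcomp Require Import zify.
Set Implicit Arguments. Unset Strict Implicit. Unset Printing Implicit Defensive.
Import GRing.Theory.
Local Open Scope ring_scope.

Section S.
Variable r : nat.
Notation T := 'I_(r + r).

Definition idx (k : T) : 'I_r := match split k with inl i => i | inr j => j end.
Definition EE : {set T} := [set lshift r i | i : 'I_r].
Definition FF : {set T} := [set rshift r i | i : 'I_r].

Lemma idxL i : idx (lshift r i) = i.
Proof. by rewrite /idx (unsplitK (inl _ i)). Qed.
Lemma idxR i : idx (rshift r i) = i.
Proof. by rewrite /idx (unsplitK (inr _ i)). Qed.

Lemma inEL i : lshift r i \in EE.
Proof. exact: imset_f. Qed.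
Lemma notinER i : rshift r i \notin EE.
Proof.
apply/imsetP => -[j _ /(congr1 val) /= h].
by have := ltn_ord j; rewrite -h; lia.
Qed.
Lemma inFR i : rshift r i \in FF.
Proof. exact: imset_f. Qed.
Lemma notinFL i : lshift r i \notin FF.
Proof.
apply/imsetP => -[j _ /(congr1 val) /= h].
by have := ltn_ord i; rewrite h; lia.
Qed.

Lemma decomp (k : T) : (k \in EE /\ k = lshift r (idx k)) \/ (k \notin EE /\ k = rshift r (idx k)).
Proof.
case: (splitP k) => [i|j] /= h.
  have -> : k = lshift r i by apply: val_inj.
  by left; rewrite idxL inEL.
have -> : k = rshift r j by apply: val_inj.
by right; rewrite idxR notinER.
Qed.

Lemma inE_eq k : k \in EE -> k = lshift r (idx k).
Proof. by move=> h; case: (decomp k) => -[h1 h2] //; rewrite h in h1. Qed.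
Lemma notinE_eq k : k \notin EE -> k = rshift r (idx k).
Proof. by move=> h; case: (decomp k) => -[h1 h2] //; rewrite h1 in h. Qed.

Lemma cardE : #|EE| = r.
Proof. by rewrite card_imset ?card_ord //; exact: lshift_inj. Qed.
Lemma cardF : #|FF| = r.
Proof. by rewrite card_imset ?card_ord //; exact: rshift_inj. Qed.

Lemma mulMJ (u : 'rV['F_2]_r) k :
  (u *m MJ r) 0 k = if k \in EE then u 0 (idx k) else (\sum_l u 0 l) - u 0 (idx k).
Proof.
rewrite /MJ mul_mx_row mulmx1 mulmxBr mulmx1.
case: (decomp k) => -[h ->]; rewrite ?inEL ?(negbTE (notinER _)) ?row_mxEl ?row_mxEr ?idxL ?idxR //.
rewrite !mxE; congr (_ - _); apply: eq_bigr => l _; rewrite mxE mulr1 //.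
Qed.

Lemma mulCR (u : 'rV['F_2]_r) (B : {set T}) k :
  (u *m col_restrict (MJ r) B) 0 k = if k \in B then (u *m MJ r) 0 k else 0.
Proof.
rewrite !mxE /col_restrict; under eq_bigr do rewrite mxE.
case: (k \in B) => //.
by rewrite big1 // => l _; rewrite mulr0.
Qed.

Lemma F2nat n : (n%:R : 'F_2) = (odd n)%:R.
Proof.
rewrite -{1}(odd_double_half n) natrD -mul2n natrM.
have -> : (2%:R : 'F_2) = 0 by apply/eqP.
by rewrite mul0r addr0.
Qed.

Lemma basis_of (B : {set T}) : #|B| = r ->
  (forall v : 'rV['F_2]_r, v *m col_restrict (MJ r) B = 0 -> v = 0) ->
  mx_basis (MJ r) B.
Proof.
move=> cB inj; apply/andP; split.
  by rewrite /mx_indep cB; exact: inj_row_free.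
apply/forallP => X; apply/implyP => /proper_card; rewrite cB => hX.
rewrite /mx_indep; apply/negP => /eqP h.
by have := rank_leq_row (col_restrict (MJ r) X); rewrite h leqNgt hX.
Qed.

Lemma not_basis (B : {set T}) (u : 'rV['F_2]_r) : #|B| = r -> u != 0 ->
  (forall k, k \in B -> (u *m MJ r) 0 k = 0) -> ~~ mx_basis (MJ r) B.
Proof.
move=> cB nu h; apply/negP => /andP[ind _].
have rf : row_free (col_restrict (MJ r) B) by move: ind; rewrite /mx_indep cB.
have := mulmx_free_eq0 u rf; rewrite (negbTE nu).
suff -> : u *m col_restrict (MJ r) B = 0 by rewrite eqxx.
apply/rowP => k; rewrite mulCR [RHS]mxE; case: ifP => // kB; exact: h.
Qed.


Lemma E_basis : mx_basis (MJ r) EE.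
Proof.
apply: (@basis_of EE cardE) => v h; apply/rowP => i.
move/rowP/(_ (lshift r i)): h.
by rewrite mulCR inEL mulMJ inEL idxL [RHS]mxE => ->; rewrite mxE.
Qed.

Lemma F_basis : ~~ odd r -> mx_basis (MJ r) FF.
Proof.
move=> ev; apply: (@basis_of FF cardF) => v h.
have e : forall j, v 0 j = \sum_l v 0 l.
  move=> j; move/rowP/(_ (rshift r j)): h.
  rewrite mulCR inFR mulMJ (negbTE (notinER _)) idxR [RHS]mxE.
  by move/eqP; rewrite subr_eq0 => /eqP ->.
have s0 : \sum_l v 0 l = 0.
  under eq_bigr do rewrite e.
  by rewrite sumr_const card_ord -mulr_natr F2nat (negbTE ev) mulr0.
by apply/rowP => j; rewrite e s0 mxE.
Qed.

Lemma notbasis (phi : T -> T) (Z : {set T}) : Z \subset EE -> {in Z &, injective phi} ->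
  (forall z, z \in Z -> phi z \notin EE) -> Z != set0 ->
  (forall z, z \in Z -> odd #|Z| = (lshift r (idx (phi z)) \in Z)) ->
  ~~ mx_basis (MJ r) ((EE :\: Z) :|: phi @: Z).
Proof.
move=> sZ inj hF nZ hc.
set S := [set i | lshift r i \in Z].
set u : 'rV['F_2]_r := \row_i ((i \in S)%:R).
have ZS : Z = lshift r @: S.
  apply/setP => k; apply/idP/imsetP.
    move=> kZ; exists (idx k); last exact: (inE_eq (subsetP sZ _ kZ)).
    by rewrite inE -(inE_eq (subsetP sZ _ kZ)).
  by case=> i iS ->; rewrite inE in iS.
have cS : #|S| = #|Z| by rewrite ZS card_imset //; exact: lshift_inj.
have sumu : \sum_l u 0 l = (odd #|Z|)%:R.
  rewrite -F2nat -cS /u.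
  transitivity (\sum_l ((l \in S)%:R : 'F_2)); first by apply eq_bigr; intros l _; rewrite mxE.
  rewrite -natr_sum; congr (_%:R); rewrite -sum1_card [RHS]big_mkcond /=.
  by apply: eq_bigr => l _; case: (l \in S).
have nu : u != 0.
  case/set0Pn: nZ => z zZ; apply/negP => /eqP u0.
  move/rowP/(_ (idx z)): u0.
  rewrite !mxE inE -(inE_eq (subsetP sZ _ zZ)) zZ /=.
  by move/eqP; rewrite oner_eq0.
apply: (not_basis (u := u)) => //.
  have dis : (EE :\: Z) :&: phi @: Z = set0.
    apply/setP => k; rewrite inE [RHS]inE; apply/negP => /andP[].
    by rewrite inE => /andP[_ kE] /imsetP[z zZ kz]; move: (hF z zZ); rewrite -kz kE.
  rewrite cardsU dis cards0 subn0 cardsD (setIidPr sZ) card_in_imset //; last by move=> ? ? ? ?; exact: lshift_inj.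
  rewrite card_in_imset // card_ord subnK //.
  by have := subset_leq_card sZ; rewrite cardE.
move=> k; rewrite mulMJ; case/setUP => [/setDP[kE kZ] | /imsetP[z zZ ->]].
  by rewrite kE mxE inE -(inE_eq kE) (negbTE kZ).
by rewrite (negbTE (hF z zZ)) sumu mxE inE -hc // subrr.
Qed.

End S.

Local Close Scope ring_scope.
Theorem theorem5p22 (r : nat) :
  ~~ odd r -> (4 <= r)%N -> ~ elem_wbo (mx_basis (MJ r)) r 3.
Proof.
move=> ev r4 H.
have dEF : EE r :&: FF r = set0.
  apply/setP => k; rewrite inE [RHS]inE; apply/negP => /andP[kE /imsetP[j _ kj]].
  by move: kE; rewrite kj (negbTE (notinER _)).
have := H _ _ (E_basis r) (F_basis ev).
rewrite cardsD dEF cards0 subn0 cardE leqnn => /(_ isT).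
case=> X [Y [phi [[sX sY cX cY] [inj imXY hZ]]]].
have hX : forall x, x \in X -> x \in EE r.
  by move=> x /(subsetP sX); rewrite inE => /andP[].
have hF : forall x, x \in X -> phi x \notin EE r.
  move=> x xX; have : phi x \in Y by rewrite -imXY imset_f.
  by move/(subsetP sY); rewrite inE => /andP[].
pose g z := lshift r (idx (phi z)).
have key : forall Z : {set 'I_(r + r)}, Z \subset X -> Z != set0 ->
    (forall z, z \in Z -> odd #|Z| = (g z \in Z)) -> False.
  move=> Z sZ nZ hc; move: (hZ Z sZ); apply/negP; apply: notbasis => //.
  - by apply/subsetP => x /(subsetP sZ) /hX.
  - by move=> x y xZ yZ; apply: inj; apply: (subsetP sZ).
  - by move=> z /(subsetP sZ) /hF.
case: (boolP [exists z in X, g z \notin X]) => [|nex]; last first.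
  apply: (key X) => //; first by rewrite -card_gt0 cX.
  move=> z zX; rewrite cX /=; apply/esym; apply/negPn.
  by apply: (contra _ nex) => h; apply/exists_inP; exists z.
case/exists_inP => a aX gaX.
have c2 : #|X :\ a| == 2 by move: cX; rewrite (cardsD1 a) aX add1n => -[->].
case/cards2P: c2 => b [c [bc Xa]].
have bX : b \in X :\ a by rewrite Xa !inE eqxx.
have cX' : c \in X :\ a by rewrite Xa !inE eqxx orbT.
have claim : forall y, y \in X :\ a -> g y = a.
  move=> y; rewrite inE => /andP[ya yX].
  case: (eqVneq (g y) y) => gyy.
    exfalso; apply: (key [set y]).
    - by rewrite sub1set.
    - by apply/set0Pn; exists y; rewrite inE.
    - by move=> z; rewrite cards1 !inE => /eqP ->; rewrite gyy eqxx.
  case: (eqVneq (g y) a) => // gya.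
  exfalso; apply: (key [set a; y]).
  - by apply/subsetP => z; rewrite !inE => /orP[]/eqP->.
  - by apply/set0Pn; exists a; rewrite !inE eqxx.
  - have ay : a != y by move: ya; rewrite in_set1 eq_sym.
    move=> z; rewrite cards2 ay /= !inE => /orP[]/eqP->.
      apply/esym/negP => /orP[]/eqP e; move: gaX; rewrite e ?aX ?yX //.
    by rewrite (negbTE gya) (negbTE gyy).
have := claim _ bX; rewrite -(claim _ cX') => /lshift_inj e.
have bX1 : b \in X by move: bX; rewrite inE => /andP[].
have cX1 : c \in X by move: cX'; rewrite inE => /andP[].
have : phi b = phi c by rewrite (notinE_eq (hF _ bX1)) (notinE_eq (hF _ cX1)) e.
by move/(inj _ _ bX1 cX1) => bc'; rewrite bc' eqxx in bc.
Qed.
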